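(* Let $n\ge2$ be an integer. Then there is a bijection between the sets $\Sigma_{n^2}$ and $\Pi_n$.
   Context: $\Sigma_{n^2}$ is the set of all $n^2\times n^2$ permutation matrices (binary matrices with exactly one 1 in every row and every column) which, when partitioned into an $n\times n$ array of $n\times n$ blocks, have exactly one entry equal to 1 in each block. $\Pi_n$ is the set of all $n\times n$ matrices whose entries are ordered pairs $\langle a,b\rangle$ with $a,b\in\{1,\dots,n\}$ such that in every row the first components of the entries, read in order, form a permutation of $\{1,\dots,n\}$, and in every column the second components of the entries, read in order, form a permutation of $\{1,\dots,n\}$. *)

(* Defs.v *)
From mathcomp Require Import all_boot all_algebra.
Set Implicit Arguments. Unset Strict Implicit. Unset Printing Implicit Defensive.

(* Row/column indices of an n^2 x n^2 matrix are 'I_(n*n) (0-based);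
   the entry (i, j) lies in block (i %/ n, j %/ n) of the n x n array of
   n x n blocks. *)

Definition is_perm_matrix (m : nat) (A : 'M[bool]_m) : bool :=
  [forall i, #|[set j | A i j]| == 1] && [forall j, #|[set i | A i j]| == 1].

Definition in_Sigma (n : nat) (A : 'M[bool]_(n * n)) : bool :=
  is_perm_matrix A &&
  [forall a : 'I_n, forall b : 'I_n,
     #|[set p : 'I_(n * n) * 'I_(n * n) |
          [&& A p.1 p.2, p.1 %/ n == a & p.2 %/ n == b]]| == 1].

(* Pi_n: n x n matrices of ordered pairs <a,b> with a, b in {0,..,n-1}
   (0-based version of {1,..,n}); in each row the first components read in
   order form a permutation, in each column the second components read in
   order form a permutation. *)
Definition in_Pi (n : nat) (M : 'M[('I_n * 'I_n)%type]_n) : bool :=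
  [forall i, perm_eq [seq (M i j).1 | j <- enum 'I_n] (enum 'I_n)] &&
  [forall j, perm_eq [seq (M i j).2 | i <- enum 'I_n] (enum 'I_n)].

(* Main.v *)
Require Import Defs.
From mathcomp Require Import all_boot all_algebra.
From mathcomp Require Import zify.

Section S.
Variable k : nat.
Local Notation N := k.+1.

Lemma idx_proof (a c : 'I_N) : a * N + c < N * N.
Proof. have := ltn_ord a; have := ltn_ord c; nia. Qed.
Definition idx (a c : 'I_N) : 'I_(N*N) := Ordinal (idx_proof a c).
Lemma hi_proof (i : 'I_(N*N)) : i %/ N < N.
Proof. by rewrite ltn_divLR. Qed.
Definition hi (i : 'I_(N*N)) : 'I_N := Ordinal (hi_proof i).
Definition lo (i : 'I_(N*N)) : 'I_N := Ordinal (ltn_pmod i (ltn0Sn k)).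
Lemma idx_div a c : idx a c %/ N = a.
Proof. by rewrite /= divnMDl // divn_small // addn0. Qed.
Lemma hi_idx a c : hi (idx a c) = a.
Proof. by apply/val_inj; rewrite /= idx_div. Qed.
Lemma lo_idx a c : lo (idx a c) = c.
Proof. by apply/val_inj; rewrite /= modnMDl modn_small. Qed.
Lemma idx_hilo i : idx (hi i) (lo i) = i.
Proof. by apply/val_inj; rewrite /= -divn_eq. Qed.
Lemma idx_eq a c a' c' : (idx a c == idx a' c') = (a == a') && (c == c').
Proof.
apply/idP/idP => [/eqP e|/andP [/eqP-> /eqP->]] //.
have h1 : hi (idx a c) = hi (idx a' c') by rewrite e.
have h2 : lo (idx a c) = lo (idx a' c') by rewrite e.
by rewrite !hi_idx in h1; rewrite !lo_idx in h2; rewrite h1 h2 !eqxx.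
Qed.

Lemma card1P (T : finType) (P : pred T) :
  reflect (exists x, forall y, P y = (y == x)) (#|[set y | P y]| == 1).
Proof.
apply: (iffP idP).
  move/cards1P=> [x hx]; exists x => y; move/setP: hx => /(_ y).
  by rewrite !inE.
move=> [x hx]; apply/cards1P; exists x; apply/setP => y; by rewrite !inE hx.
Qed.

Lemma permP (F : 'I_N -> 'I_N) :
  perm_eq [seq F x | x <- enum 'I_N] (enum 'I_N) <-> injective F.
Proof.
split.
  move/perm_uniq; rewrite enum_uniq => u; apply/injectiveP; exact: u.
move=> inj; apply: uniq_perm; [by rewrite map_inj_uniq ?enum_uniq | exact: enum_uniq | ].
move=> x; rewrite mem_enum; have [g _ gK] := injF_bij inj.
by apply/mapP; exists (g x); rewrite ?mem_enum ?gK.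
Qed.

Definition gM (M : 'M[('I_N * 'I_N)%type]_N) : 'M[bool]_(N*N) :=
  \matrix_(i, j) (M (hi i) (hi j) == (lo i, lo j)).
Definition fA (A : 'M[bool]_(N*N)) : 'M[('I_N * 'I_N)%type]_N :=
  \matrix_(a, b) odflt (ord0, ord0) [pick p : 'I_N * 'I_N | A (idx a p.1) (idx b p.2)].

Lemma fgM M : fA (gM M) = M.
Proof.
apply/matrixP => a b; rewrite mxE; case: pickP => [p|H] /=.
  by rewrite mxE !hi_idx !lo_idx => /eqP ->; rewrite -surjective_pairing.
by have := H (M a b); rewrite /= mxE !hi_idx !lo_idx -surjective_pairing eqxx.
Qed.

Section Sig.
Variable A : 'M[bool]_(N*N).
Hypothesis hs : in_Sigma A.

Lemma row_uniq i j j' : A i j -> A i j' -> j = j'.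
Proof.
move: hs => /andP [/andP [/forallP H _] _].
have /card1P [x hx] := H i.
by rewrite !hx => /eqP -> /eqP ->.
Qed.

Lemma col_uniq j i i' : A i j -> A i' j -> i = i'.
Proof.
move: hs => /andP [/andP [_ /forallP H] _].
have /card1P [x hx] := H j.
by rewrite !hx => /eqP -> /eqP ->.
Qed.

Lemma block a b : exists p, forall q, A (idx a q.1) (idx b q.2) = (q == p).
Proof.
move: hs => /andP [_ /forallP H].
have /forallP /(_ b) /card1P [x hx] := H a.
have := hx x; rewrite eqxx /= => /and3P [_ /eqP h1 /eqP h2].
have e1 : x.1 = idx a (lo x.1).
  by apply/val_inj; rewrite /= -h1 -divn_eq.
have e2 : x.2 = idx b (lo x.2).
  by apply/val_inj; rewrite /= -h2 -divn_eq.
exists (lo x.1, lo x.2) => [[c d]].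
have := hx (idx a c, idx b d); rewrite /= !idx_div !eqxx !andbT => ->.
have -> : x = (idx a (lo x.1), idx b (lo x.2)) by rewrite -e1 -e2 -surjective_pairing.
by rewrite /= !lo_idx !xpair_eqE !idx_eq !eqxx.
Qed.

Lemma fA_spec a b q : A (idx a q.1) (idx b q.2) = (q == fA A a b).
Proof.
have [p hp] := block a b.
rewrite mxE; case: pickP => [p' hp'|H] /=.
  by rewrite hp in hp'; rewrite (eqP hp') hp.
by have := H p; rewrite hp eqxx.
Qed.

Lemma gfA : gM (fA A) = A.
Proof.
apply/matrixP => i j; rewrite mxE.
have := fA_spec (hi i) (hi j) (lo i, lo j); rewrite /= !idx_hilo => ->.
by rewrite eq_sym.
Qed.

Lemma fA_Pi : in_Pi (fA A).
Proof.
apply/andP; split; apply/forallP => x; apply/permP.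
  move=> b b' e.
  have h := fA_spec x b (fA A x b); rewrite eqxx in h.
  have h' := fA_spec x b' (fA A x b'); rewrite eqxx -e in h'.
  have := row_uniq _ _ _ h h'; move/eqP; rewrite idx_eq => /andP [/eqP -> _] //.
move=> a a' e.
have h := fA_spec a x (fA A a x); rewrite eqxx in h.
have h' := fA_spec a' x (fA A a' x); rewrite eqxx -e in h'.
have := col_uniq _ _ _ h h'; move/eqP; rewrite idx_eq => /andP [/eqP -> _] //.
Qed.
End Sig.

Lemma gM_Sigma M : in_Pi M -> in_Sigma (gM M).
Proof.
move=> /andP [/forallP HR /forallP HC].
apply/andP; split; [apply/andP; split; apply/forallP | apply/forallP].
- move=> i; apply/card1P.
  have inj := proj1 (permP _) (HR (hi i)).
  have [g _ gK] := injF_bij inj.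
  set b0 := g (lo i).
  have Hb0 : (M (hi i) b0).1 = lo i by rewrite /b0 gK.
  exists (idx b0 (M (hi i) b0).2) => j; rewrite mxE.
  apply/eqP/eqP => [e|->].
    have eb : hi j = b0.
      by apply: inj => /=; rewrite e Hb0.
    by rewrite -(idx_hilo j) eb -eb e.
  by rewrite hi_idx lo_idx -Hb0 -surjective_pairing.
- move=> j; apply/card1P.
  have inj := proj1 (permP _) (HC (hi j)).
  have [g _ gK] := injF_bij inj.
  set a0 := g (lo j).
  have Ha0 : (M a0 (hi j)).2 = lo j by rewrite /a0 gK.
  exists (idx a0 (M a0 (hi j)).1) => i; rewrite mxE.
  apply/eqP/eqP => [e|->].
    have ea : hi i = a0.
      by apply: inj => /=; rewrite e Ha0.
    by rewrite -(idx_hilo i) ea -ea e.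
  by rewrite hi_idx lo_idx -Ha0 -surjective_pairing.
- move=> a; apply/forallP => b; apply/card1P.
  exists (idx a (M a b).1, idx b (M a b).2) => [[i j]] /=.
  rewrite -(idx_hilo i) -(idx_hilo j).
  move: (hi i) (lo i) (hi j) (lo j) => a' c' b' d'.
  rewrite mxE !hi_idx !lo_idx !idx_div xpair_eqE !idx_eq.
  apply/idP/idP.
    by move/and3P => [/eqP e /eqP/val_inj ea /eqP/val_inj eb]; rewrite -ea -eb e /= !eqxx.
  move/and3P => [/andP [/eqP -> /eqP ->] /eqP -> /eqP ->].
  by rewrite !eqxx -surjective_pairing eqxx.
Qed.

End S.

Theorem lemma2 (n : nat) (hn : 2 <= n) :
  exists f : {A : 'M[bool]_(n * n) | in_Sigma A} ->
             {M : 'M[('I_n * 'I_n)%type]_n | in_Pi M},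
    bijective f.
Proof.
case: n hn => [|k] // hn.
exists (fun A => exist _ (fA k (val A)) (@fA_Pi k _ (valP A))).
exists (fun M => exist _ (gM k (val M)) (@gM_Sigma k _ (valP M))).
  by move=> [A hA]; apply/val_inj => /=; exact: (@gfA k).
by move=> [M hM]; apply/val_inj => /=; exact: (@fgM k).
Qed.
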